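(* Let $q$ be a prime power, $m\ge1$, $s\ge1$ and $0\le d<sq$. Let $S=\{\mathbf{j}\in\mathbb{N}^m: |\mathbf{j}|<s\}$ and for $\mathbf{j}\in S$ let $d_{\mathbf{j}}=\min(m(q-1),d-|\mathbf{j}|q)$. Fix an enumeration $\mathbb{F}_q=\{\alpha_0,\dots,\alpha_{q-1}\}$ and for an integer $e$ put $$\mathcal{I}_e=\{(\alpha_{i_1},\dots,\alpha_{i_m}) : 0\le i_l\le q-1 \ (1\le l\le m),\ \textstyle\sum_{l} i_l\le e\}\subset\mathbb{F}_q^m$$ (empty if $e<0$). Then $$\mathcal{I}=\{(\mathbf{j},\mathbf{P}) : \mathbf{j}\in S,\ \mathbf{P}\in\mathcal{I}_{d_{\mathbf{j}}}\}\subset S\times\mathbb{F}_q^m$$ is an information set of the multiplicity code $\mathrm{Mult}^s_d$, i.e. the map $\mathrm{Mult}^s_d\to\mathbb{F}_q^{\mathcal{I}}$, $c\mapsto (c_{\mathbf{j},\mathbf{P}})_{(\mathbf{j},\mathbf{P})\in\mathcal{I}}$, is a bijection. In particular $|\mathcal{I}|=\binom{m+d}{m}$.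
   Context: For $F\in\mathbb{F}_q[X_1,\dots,X_m]$ and $\mathbf{i}\in\mathbb{N}^m$, the Hasse derivative $H(F,\mathbf{i})$ is the coefficient of $\mathbf{Z}^{\mathbf{i}}$ in $F(\mathbf{X}+\mathbf{Z})\in\mathbb{F}_q[\mathbf{X},\mathbf{Z}]$. The multiplicity code $\mathrm{Mult}^s_d$ is the set of all words $c=(c_{\mathbf{j},\mathbf{P}})_{\mathbf{j}\in S,\ \mathbf{P}\in\mathbb{F}_q^m}$ with $c_{\mathbf{j},\mathbf{P}}=H(F,\mathbf{j})(\mathbf{P})$, as $F$ ranges over polynomials in $\mathbb{F}_q[X_1,\dots,X_m]$ of total degree at most $d$; it is an $\mathbb{F}_q$-linear space. $|\mathbf{j}|$ denotes the sum of the coordinates of $\mathbf{j}$. *)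

(* Defs.v *)
From HB Require Import structures.
From mathcomp Require Import all_boot all_order all_algebra all_field.
Set Implicit Arguments. Unset Strict Implicit. Unset Printing Implicit Defensive.
Import Order.TTheory GRing.Theory Num.Theory.
Local Open Scope ring_scope.

Definition point (F : finFieldType) (m : nat) := {ffun 'I_m -> F}.

(* Exponent vectors with every entry <= d; a polynomial of total degree <= d
   is given by its coefficients on the exponent vectors of total degree <= d. *)
Definition mono (m d : nat) := {ffun 'I_m -> 'I_d.+1}.
Definition mdeg (m d : nat) (e : mono m d) : nat := (\sum_(l < m) (e l : nat))%N.

Definition Sidx (m s : nat) :=
  {j : {ffun 'I_m -> 'I_s} | (\sum_(l < m) (j l : nat) < s)%N}.
Definition jabs (m s : nat) (j : Sidx m s) : nat := (\sum_(l < m) (val j l : nat))%N.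

(* Hasse derivative H(F, j) evaluated at P, for F = \sum_e c_e X^e:
   coefficient of Z^j in F(X+Z) is \sum_e c_e \prod_l binom(e_l, j_l) X_l^(e_l - j_l). *)
Definition hasse_eval (F : finFieldType) (m d : nat) (c : {ffun mono m d -> F})
  (j : 'I_m -> nat) (P : point F m) : F :=
  \sum_(e : mono m d | (mdeg e <= d)%N)
     c e * \prod_(l < m) ((binomial (e l) (j l))%:R * P l ^+ (e l - j l)%N).

Definition word (F : finFieldType) (m s : nat) := {ffun Sidx m s * point F m -> F}.

Definition mult_enc (F : finFieldType) (m s d : nat) (c : {ffun mono m d -> F})
  : word F m s :=
  [ffun jP : Sidx m s * point F m => hasse_eval c (fun l => (val jP.1 l : nat)) jP.2].

Definition MultCode (F : finFieldType) (m s d : nat) : {set word F m s} :=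
  [set mult_enc s c | c : {ffun mono m d -> F}].

Definition dj (F : finFieldType) (m s d : nat) (j : Sidx m s) : int :=
  Num.min ((m * (#|F| - 1))%N%:Z) (d%:Z - (jabs j * #|F|)%N%:Z).

Definition Ie (F : finFieldType) (m : nat) (alpha : 'I_#|F| -> F) (e : int)
  : {set point F m} :=
  [set P | [exists i : {ffun 'I_m -> 'I_#|F|},
             ((\sum_(l < m) (i l : nat))%N%:Z <= e) && (P == [ffun l => alpha (i l)])]].

Definition infoSet (F : finFieldType) (m s d : nat) (alpha : 'I_#|F| -> F)
  : {set Sidx m s * point F m} :=
  [set jP : Sidx m s * point F m | jP.2 \in Ie m alpha (@dj F m s d jP.1)].

(* Main.v *)
Require Import Defs.
From HB Require Import structures.
From mathcomp Require Import all_boot all_order all_algebra all_field.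
Import Order.TTheory GRing.Theory Num.Theory.
Local Open Scope ring_scope.
From mathcomp Require Import zify.
Set Implicit Arguments. Unset Strict Implicit. Unset Printing Implicit Defensive.

Lemma coef_XaddC_exp (R : comNzRingType) (x : R) i j :
  (('X + x%:P) ^+ i)`_j = x ^+ (i - j) *+ 'C(i, j).
Proof.
elim: i j => [|i IH] [|j].
- by rewrite expr0 coef1 /= bin0.
- by rewrite expr0 coef1 /= bin0n.
- by rewrite exprSr mulrDr coefD coefMX /= coefMC IH add0r !subn0 !bin0 !mulr1n exprSr.
- rewrite exprSr mulrDr coefD coefMX /= coefMC !IH binS mulrnDr subSS.
  have [lt|ge] := ltnP i j.
    by rewrite (bin_small lt) (bin_small (leq_trans lt (leqnSn _))) !mulr0n mul0r addr0.
  rewrite addrC; congr (_ + _).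
  have [->|ltji] := eqVneq j i.
    by rewrite bin_small // !mulr0n mul0r.
  rewrite mulrnAl -exprSr; congr (_ ^+ _ *+ _).
  rewrite subnS prednK // subn_gt0 ltn_neqAle ltji ge //.
Qed.


Lemma hasse1 (R : comNzRingType) (p : {poly R}) x j N : (size p <= N)%N ->
  \sum_(i < N) p`_i * ('C(i, j)%:R * x ^+ (i - j)) = (p \Po ('X + x%:P))`_j.
Proof.
move=> le; rewrite comp_polyE coef_sum (big_ord_widen N (fun i => (p`_i *: ('X + x%:P) ^+ i)`_j) le) /=.
rewrite [RHS]big_mkcond; apply: eq_bigr => i _; case: ifP => lt.
  by rewrite coefZ coef_XaddC_exp mulr_natl.
by rewrite nth_default ?mul0r // leqNgt lt.
Qed.

Lemma qgt0 (F : finFieldType) : (0 < #|F|)%N.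
Proof. by apply/card_gt0P; exists 0. Qed.

Definition modq (F : finFieldType) (t : nat) : 'I_#|F| := Ordinal (ltn_pmod t (qgt0 F)).

Definition Bp (F : finFieldType) (alpha : 'I_#|F| -> F) (n : nat) : {poly F} :=
  \prod_(0 <= t < n) ('X - (alpha (modq F t))%:P).

Lemma size_Bp (F : finFieldType) (alpha : 'I_#|F| -> F) n : size (@Bp F alpha n) = n.+1.
Proof.
rewrite /Bp -(big_map (fun t => alpha (modq F t)) xpredT (fun x => 'X - x%:P)).
by rewrite size_prod_XsubC size_map size_iota subn0.
Qed.

Lemma Bp_comp (F : finFieldType) (alpha : 'I_#|F| -> F) (a : F) n : @Bp F alpha n \Po ('X + a%:P) =
  \prod_(0 <= t < n) ('X + (a - alpha (modq F t))%:P).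
Proof.
rewrite /Bp (big_morph (fun p => p \Po ('X + a%:P)) (fun p q => comp_polyM p q _)
   (comp_polyC 1 _)).
apply: eq_bigr => t _.
by rewrite comp_polyB comp_polyX comp_polyC polyCB addrA.
Qed.

Definition mu (q : nat) (i : nat) (n : nat) : nat :=
  (\sum_(0 <= t < n | t %% q == i) 1)%N.

Lemma Bp_fact (F : finFieldType) (alpha : 'I_#|F| -> F) (i : 'I_#|F|) n : @Bp F alpha n \Po ('X + (alpha i)%:P) =
  'X^(mu #|F| i n) * \prod_(0 <= t < n | (t %% #|F|)%N != i) ('X + (alpha i - alpha (modq F t))%:P).
Proof.
rewrite Bp_comp (bigID (fun t => (t %% #|F|)%N == i)) /=; congr (_ * _).
rewrite /mu (big_morph (fun k => 'X ^+ k) (exprD 'X) (expr0 'X)).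
apply: eq_bigr => t /eqP ti.
have -> : modq F t = i by apply: val_inj.
by rewrite subrr addr0 expr1.
Qed.

Lemma mu_mulD (q i j : nat) : (i < q)%N -> mu q i (j * q + i) = j.
Proof.
move=> iq; rewrite /mu.
rewrite (@big_cat_nat _ _ _ (j * q)) ?leq_addr // /=.
rewrite [X in (_ + X)%N]big1_seq ?addn0; last first.
  move=> t /andP[/eqP ti]; rewrite mem_index_iota => /andP[h1 h2].
  exfalso; move: ti; rewrite -(subnKC h1) modnMDl modn_small; last first.
    lia.
  lia.
elim: j => [|j IH]; first by rewrite mul0n big_geq.
rewrite mulSnr (@big_cat_nat _ _ _ (j * q)) ?leq_addr // /= IH.
rewrite -{1}(add0n (j * q)%N) big_addn addKn.
rewrite big_mkord (eq_bigl (fun u : 'I_q => u == Ordinal iq)); last first.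
  by move=> u /=; rewrite addnC modnMDl modn_small.
by rewrite big_pred1_eq addn1.
Qed.

Lemma mu_mono q i n1 n2 : (n1 <= n2)%N -> (mu q i n1 <= mu q i n2)%N.
Proof.
move=> le; rewrite /mu (@big_cat_nat _ _ _ n1 0 n2) //=; exact: leq_addr.
Qed.

Lemma mu_gt (q i j n : nat) : (i < q)%N -> (j * q + i < n)%N -> (j < mu q i n)%N.
Proof.
move=> iq lt; apply: leq_trans (mu_mono q i lt).
rewrite /mu big_mkcond big_nat_recr //= -big_mkcond -/(mu q i (j * q + i)) mu_mulD //.
by rewrite modnMDl modn_small // eqxx addn1.
Qed.


Lemma coefB_zero (F : finFieldType) (alpha : 'I_#|F| -> F) n n' : (n' < n)%N ->
  (Bp alpha n \Po ('X + (alpha (modq F n'))%:P))`_(n' %/ #|F|) = 0.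
Proof.
move=> lt; rewrite Bp_fact coefXnM ifT //.
apply: mu_gt; first exact: ltn_pmod (qgt0 F).
by rewrite /= -divn_eq.
Qed.

Lemma coefB_nz (F : finFieldType) (alpha : 'I_#|F| -> F) n : injective alpha ->
  (Bp alpha n \Po ('X + (alpha (modq F n))%:P))`_(n %/ #|F|) != 0.
Proof.
move=> inj; rewrite Bp_fact coefXnM.
have -> : mu #|F| (modq F n) n = (n %/ #|F|)%N.
  rewrite /= {2}(divn_eq n #|F|) mu_mulD //; exact: ltn_pmod (qgt0 F).
rewrite ltnn subnn -horner_coef0 horner_prod prodf_seq_neq0.
apply/allP => t _; apply/implyP => tn.
rewrite hornerD hornerX hornerC add0r subr_eq0.
apply/negP => /eqP /inj /(congr1 val) /= e.
by move: tn; rewrite /= e eqxx.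
Qed.


Definition mon (F : finFieldType) (m d : nat) (e : mono m d) (j : 'I_m -> nat) (P : point F m) : F :=
  \prod_(l < m) ((binomial (e l) (j l))%:R * P l ^+ (e l - j l)).

Definition jq (F : finFieldType) (m d : nat) (k : mono m d) : 'I_m -> nat :=
  fun l => (k l %/ #|F|)%N.

Definition Pt (F : finFieldType) (alpha : 'I_#|F| -> F) (m d : nat) (k : mono m d) : point F m :=
  [ffun l => alpha (modq F (k l))].

Definition bk (F : finFieldType) (alpha : 'I_#|F| -> F) (m d : nat) (k e : mono m d) : F :=
  \prod_(l < m) (Bp alpha (k l))`_(e l).

Definition Mk (F : finFieldType) (alpha : 'I_#|F| -> F) (m d : nat) (k' k : mono m d) : F :=
  \prod_(l < m) (Bp alpha (k l) \Po ('X + (alpha (modq F (k' l)))%:P))`_(k' l %/ #|F|).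

Lemma le_mdeg (m d : nat) (k : mono m d) l : (k l <= mdeg k)%N.
Proof. by rewrite /mdeg (bigD1 l) //= leq_addr. Qed.

Lemma sumG (F : finFieldType) (alpha : 'I_#|F| -> F) (m d : nat) (k' k : mono m d) :
  (mdeg k <= d)%N ->
  \sum_(e : mono m d | (mdeg e <= d)%N) bk alpha k e * mon e (jq F k') (Pt alpha k') =
  Mk alpha k' k.
Proof.
move=> kd.
rewrite big_mkcond /=.
under eq_bigr => e _.
  rewrite (_ : (if _ then _ else _) = bk alpha k e * mon e (jq F k') (Pt alpha k')).
  over.
  case: ifP => // /negbT ed.
  have [l lt] : exists l, (k l < e l)%N.
    apply/existsP; apply: contraR ed => /existsP nex.
    apply: leq_trans kd; apply: leq_sum => l _.
    by rewrite leqNgt; apply/negP => h; apply: nex; exists l.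
  rewrite /bk (bigD1 l) //= nth_default ?mul0r //.
  by rewrite size_Bp.
rewrite /bk /mon.
under eq_bigr => e _ do rewrite -big_split /=.
rewrite -(bigA_distr_bigA (fun (l : 'I_m) (i : 'I_d.+1) => (Bp alpha (k l))`_i * ('C(i, jq F k' l)%:R * Pt alpha k' l ^+ (i - jq F k' l)))) /Mk; apply: eq_bigr => l _.
rewrite -(@hasse1 _ _ _ _ d.+1); last by rewrite size_Bp ltnS (leq_trans (le_mdeg k l)).
by apply: eq_bigr => i _; rewrite /Pt ffunE.
Qed.

Definition Lk (F : finFieldType) (alpha : 'I_#|F| -> F) (m d : nat) (c : {ffun mono m d -> F}) (k : mono m d) : F :=
  hasse_eval c (jq F k) (Pt alpha k).

Definition Psi (F : finFieldType) (alpha : 'I_#|F| -> F) (m d : nat) (c : {ffun mono m d -> F}) : {ffun mono m d -> F} :=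
  [ffun k => if (mdeg k <= d)%N then Lk alpha c k else c k].

Definition Phi (F : finFieldType) (alpha : 'I_#|F| -> F) (m d : nat) (a : {ffun mono m d -> F}) : {ffun mono m d -> F} :=
  [ffun e => if (mdeg e <= d)%N then \sum_(k | (mdeg k <= d)%N) a k * bk alpha k e else a e].

Lemma PsiPhi_in (F : finFieldType) (alpha : 'I_#|F| -> F) (m d : nat) a (k' : mono m d) :
  (mdeg k' <= d)%N -> Psi alpha (Phi alpha a) k' = \sum_(k | (mdeg k <= d)%N) a k * Mk alpha k' k.
Proof.
move=> kd; rewrite /Psi ffunE kd /Lk /hasse_eval.
under eq_bigr => e ed do rewrite /Phi ffunE ed mulr_suml.
rewrite exchange_big /=; apply: eq_bigr => k kd2.
rewrite -(sumG alpha k' kd2) mulr_sumr; apply: eq_bigr => e _.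
by rewrite mulrA.
Qed.

Lemma PsiPhi_out (F : finFieldType) (alpha : 'I_#|F| -> F) (m d : nat) a (k' : mono m d) :
  ~~ (mdeg k' <= d)%N -> Psi alpha (Phi alpha a) k' = a k'.
Proof. by move=> /negbTE kd; rewrite /Psi /Phi !ffunE kd. Qed.

Lemma Mk_zero (F : finFieldType) (alpha : 'I_#|F| -> F) (m d : nat) (k' k : mono m d) l :
  (k' l < k l)%N -> Mk alpha k' k = 0.
Proof. by move=> lt; rewrite /Mk (bigD1 l) //= coefB_zero ?mul0r. Qed.

Lemma Mk_nz (F : finFieldType) (alpha : 'I_#|F| -> F) (m d : nat) (k : mono m d) :
  injective alpha -> Mk alpha k k != 0.
Proof. by move=> inj; apply/prodf_neq0 => l _; apply: coefB_nz. Qed.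

Lemma mdeg_lt (m d : nat) (k k' : mono m d) :
  (forall l, k l <= k' l)%N -> k != k' -> (mdeg k < mdeg k')%N.
Proof.
move=> le ne.
have [l nel] : exists l, k l != k' l.
  case/boolP: [exists l, k l != k' l] => [/existsP//|/existsPn h].
  case/negP: ne; apply/eqP/ffunP => l; apply/eqP.
  by have := h l; rewrite negbK.
have ltl : (k l < k' l)%N by rewrite ltn_neqAle le andbT.
rewrite /mdeg (bigD1 l) //= [X in (_ < X)%N](bigD1 l) //=.
have h : (\sum_(i < m | i != l) k i <= \sum_(i < m | i != l) k' i)%N.
  by apply: leq_sum => i _; exact: le i.
by rewrite -addSn; apply: leq_add.
Qed.

Lemma PsiPhi_inj (F : finFieldType) (alpha : 'I_#|F| -> F) (m d : nat) :
  injective alpha -> injective (fun a : {ffun mono m d -> F} => Psi alpha (Phi alpha a)).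
Proof.
move=> inj a1 a2 /= eq.
have out k : ~~ (mdeg k <= d)%N -> a1 k = a2 k.
  by move=> kd; rewrite -(PsiPhi_out alpha a1 kd) -(PsiPhi_out alpha a2 kd) eq.
have ind : forall N (k : mono m d), (mdeg k < N)%N -> a1 k = a2 k.
  elim=> // N IH k kN.
  have [kd|kd] := boolP (mdeg k <= d)%N; last exact: out.
  have := congr1 (fun f : {ffun mono m d -> F} => f k) eq; rewrite /= !PsiPhi_in //.
  rewrite (bigD1 k) //= [X in _ = X](bigD1 k) //=.
  rewrite (eq_bigr (fun k2 => a2 k2 * Mk alpha k k2)); last first.
    move=> k2 /andP[_ ne].
    have [lt|ge] := boolP [exists l, (k l < k2 l)%N].
      by case/existsP: lt => l lt; rewrite (Mk_zero alpha lt) !mulr0.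
    rewrite (IH k2) //; apply: leq_trans (mdeg_lt _ ne) _.
      by move=> l; rewrite leqNgt; apply/negP => h; apply: (negP ge); apply/existsP; exists l.
    by rewrite -ltnS.
  move/addIr/eqP; rewrite -subr_eq0 -mulrBl mulf_eq0 (negbTE (Mk_nz k inj)) orbF subr_eq0.
  by move/eqP.
apply/ffunP => k; apply: (ind (mdeg k).+1); exact: ltnSn.
Qed.

Lemma Psi_bij (F : finFieldType) (alpha : 'I_#|F| -> F) (m d : nat) :
  injective alpha -> bijective (@Psi F alpha m d).
Proof.
move=> inj.
have [g fg gf] := injF_bij (@PsiPhi_inj F alpha m d inj).
pose h x := Phi alpha (g x).
have hP : cancel h (@Psi F alpha m d) by move=> x; rewrite /h gf.
have [h' hh' h'h] := injF_bij (can_inj hP).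
exists h => // x.
by rewrite -{1}(h'h x) hP h'h.
Qed.


Lemma card_E (m d : nat) : #|[set e : mono m d | (mdeg e <= d)%N]| = 'C(m + d, m).
Proof.
rewrite -card_partial_ord_partitions.
pose tf (t : m.-tuple 'I_d.+1) : mono m d := [ffun l => tnth t l].
have tf_inj : injective tf.
  by move=> t1 t2 /ffunP e; apply: eq_from_tnth => l; have := e l; rewrite !ffunE.
rewrite -(card_imset _ tf_inj); apply: eq_card => e; rewrite inE.
apply/idP/imsetP.
  move=> ed; exists [tuple e l | l < m].
    by rewrite inE big_tuple; under eq_bigr => l _ do rewrite tnth_mktuple.
  by apply/ffunP => l; rewrite ffunE tnth_mktuple.
case=> t; rewrite inE big_tuple => td ->.
by rewrite /mdeg; under eq_bigr => l _ do rewrite ffunE.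
Qed.

Definition j0 (m s : nat) : Sidx m s.+1.
Proof. exists [ffun _ => ord0]; by rewrite big1 // => l _; rewrite ffunE. Defined.

Definition jS (F : finFieldType) (m s d : nat) (k : mono m d) : Sidx m s.+1 :=
  insubd (j0 m s) [ffun l => inord (k l %/ #|F|)].

Definition emb (F : finFieldType) (alpha : 'I_#|F| -> F) (m s d : nat) (k : mono m d)
  : Sidx m s.+1 * point F m := (jS F s k, Pt alpha k).

Lemma sum_div_lt (F : finFieldType) (m s d : nat) (k : mono m d) :
  (mdeg k <= d)%N -> (d < s.+1 * #|F|)%N -> (\sum_(l < m) (k l %/ #|F|) < s.+1)%N.
Proof.
move=> kd ds.
rewrite -(@ltn_pmul2r #|F|) ?qgt0 //; apply: leq_ltn_trans ds.
rewrite big_distrl /=; apply: leq_trans kd; apply: leq_sum => l _.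
exact: leq_trunc_div.
Qed.

Lemma jS_val (F : finFieldType) (m s d : nat) (k : mono m d) l :
  (mdeg k <= d)%N -> (d < s.+1 * #|F|)%N -> (val (jS F s k) l : nat) = (k l %/ #|F|)%N.
Proof.
move=> kd ds; have lt := sum_div_lt kd ds.
have bnd : forall l', (k l' %/ #|F| < s.+1)%N.
  move=> l'; apply: leq_ltn_trans lt; rewrite (bigD1 l') //=; exact: leq_addr.
rewrite /jS val_insubd ifT; first by rewrite ffunE inordK.
by under eq_bigr => l' _ do rewrite ffunE inordK //.
Qed.

Lemma hasse_eval_ext (F : finFieldType) (m d : nat) (c : {ffun mono m d -> F}) j1 j2 P :
  (forall l, j1 l = j2 l) -> hasse_eval c j1 P = hasse_eval c j2 P.
Proof.
move=> e; apply: eq_bigr => x _; congr (_ * _); apply: eq_bigr => l _; by rewrite e.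
Qed.

Lemma enc_emb (F : finFieldType) (alpha : 'I_#|F| -> F) (m s d : nat) (c : {ffun mono m d -> F}) (k : mono m d) :
  (mdeg k <= d)%N -> (d < s.+1 * #|F|)%N ->
  mult_enc s.+1 c (emb alpha s k) = Lk alpha c k.
Proof.
move=> kd ds; rewrite /mult_enc ffunE /Lk /=.
by apply: hasse_eval_ext => l; rewrite jS_val.
Qed.

Lemma emb_inj (F : finFieldType) (alpha : 'I_#|F| -> F) (m s d : nat) :
  injective alpha -> (d < s.+1 * #|F|)%N ->
  {in [set e : mono m d | (mdeg e <= d)%N] &, injective (@emb F alpha m s d)}.
Proof.
move=> inj ds k1 k2; rewrite !inE => k1d k2d [] ej eP.
apply/ffunP => l; apply: val_inj => /=.
have hj : (k1 l %/ #|F| = k2 l %/ #|F|)%N by rewrite -(@jS_val F m s d k1) // -(@jS_val F m s d k2) // ej.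
have hP : (k1 l %% #|F| = k2 l %% #|F|)%N.
  have := congr1 (fun f : point F m => f l) eP; rewrite /Pt !ffunE => /inj.
  by move/(congr1 val).
by rewrite (divn_eq (k1 l) #|F|) (divn_eq (k2 l) #|F|) hj hP.
Qed.

Lemma emb_img (F : finFieldType) (alpha : 'I_#|F| -> F) (m s d : nat) :
  (d < s.+1 * #|F|)%N ->
  (@emb F alpha m s d) @: [set e : mono m d | (mdeg e <= d)%N] = infoSet m s.+1 d alpha.
Proof.
move=> ds; apply/setP => x; apply/imsetP/idP.
  case=> k; rewrite inE => kd ->.
  rewrite inE /= /Ie inE; apply/existsP; exists [ffun l => modq F (k l)].
  apply/andP; split; last by apply/eqP/ffunP => l; rewrite !ffunE.
  rewrite /dj le_min; apply/andP; split.
    rewrite lez_nat; under eq_bigr => l _ do rewrite ffunE.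
    rewrite -[X in (_ <= X * _)%N]card_ord -sum_nat_const; apply: leq_sum => l _ /=.
    by rewrite -ltnS subn1 prednK ?qgt0 // ltn_pmod ?qgt0.
  rewrite lerBrDr -PoszD lez_nat.
  have -> : jabs (jS F s k) = (\sum_(l < m) (k l %/ #|F|))%N.
    by apply: eq_bigr => l _; rewrite jS_val.
  under eq_bigr => l _ do rewrite ffunE.
  rewrite big_distrl /= -big_split /=; apply: leq_trans kd.
  by apply: leq_sum => l _; rewrite addnC -divn_eq.
case: x => j P; rewrite inE /= /Ie inE => /existsP[i /andP[hi /eqP ->]].
move: hi; rewrite /dj le_min => /andP[_]; rewrite lerBrDr -PoszD lez_nat => hi.
have bnd : forall l, (val j l * #|F| + i l <= d)%N.
  move=> l; apply: leq_trans hi; rewrite addnC; apply: leq_add.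
    by rewrite (bigD1 l) //= leq_addr.
  by rewrite leq_mul2r /jabs (bigD1 l) //= leq_addr orbT.
pose e : mono m d := [ffun l => inord (val j l * #|F| + i l)].
have eE : forall l, (e l : nat) = (val j l * #|F| + i l)%N.
  by move=> l; rewrite ffunE inordK // ltnS.
have ed : (mdeg e <= d)%N.
  apply: leq_trans hi; rewrite /mdeg; under eq_bigr => l _ do rewrite eE.
  by rewrite big_split /= addnC big_distrl.
exists e; first by rewrite inE.
congr (_, _).
  apply: val_inj; apply/ffunP => l; apply: val_inj.
  symmetry; rewrite /= (@jS_val F m s d e) // eE divnMDl ?qgt0 // divn_small ?addn0 //.
apply/ffunP => l; rewrite !ffunE; congr (alpha _); apply: val_inj => /=.
by rewrite inordK ?ltnS ?bnd // modnMDl modn_small.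
Qed.


Definition trunc (F : finFieldType) (m d : nat) (c : {ffun mono m d -> F}) : {ffun mono m d -> F} :=
  [ffun e => if (mdeg e <= d)%N then c e else 0].

Lemma enc_trunc (F : finFieldType) (m s d : nat) (c : {ffun mono m d -> F}) :
  mult_enc s (trunc c) = mult_enc s c.
Proof.
apply/ffunP => x; rewrite !ffunE; apply: eq_bigr => e ed.
by rewrite ffunE ed.
Qed.

Unset Implicit Arguments. Set Strict Implicit.
Theorem mainTheorem6 (F : finFieldType) (m s d : nat) (alpha : 'I_#|F| -> F) :
  (0 < m)%N -> (0 < s)%N -> (d < s * #|F|)%N -> bijective alpha ->
  let I := infoSet m s d alpha in
  [/\ (* restriction to I is injective on Mult^s_d *)
      {in MultCode F m s d &, forall c1 c2 : word F m s,
          (forall x, x \in I -> c1 x = c2 x) -> c1 = c2},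
      (* and surjective onto F^I *)
      (forall v : Sidx m s * point F m -> F,
          exists2 c, c \in MultCode F m s d & forall x, x \in I -> c x = v x)
    & #|I| = 'C(m + d, m)].
Proof.
case: s => [//|s] _ _ ds /bij_inj inj I.
have imgI : I = (@emb F alpha m s d) @: [set e : mono m d | (mdeg e <= d)%N].
  by rewrite emb_img.
have [g Pg gP] := @Psi_bij F alpha m d inj.
split.
- move=> w1 w2 /imsetP[c1 _ ->] /imsetP[c2 _ ->] agree.
  rewrite -(enc_trunc s.+1 c1) -(enc_trunc s.+1 c2); congr mult_enc.
  apply: (bij_inj (@Psi_bij F alpha m d inj)); apply/ffunP => k.
  rewrite /Psi !ffunE; case: ifP => kd; last by rewrite kd.
  rewrite -!(@enc_emb F alpha m s d) // !enc_trunc; apply: agree.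
  by rewrite imgI; apply: imset_f; rewrite inE.
- move=> v.
  pose t : {ffun mono m d -> F} := [ffun k => if (mdeg k <= d)%N then v (emb alpha s k) else 0].
  exists (mult_enc s.+1 (g t)); first exact: imset_f.
  move=> x; rewrite imgI => /imsetP[k]; rewrite inE => kd ->.
  rewrite enc_emb //.
  have := congr1 (fun f : {ffun mono m d -> F} => f k) (gP t).
  by rewrite /Psi /t !ffunE kd.
- by rewrite imgI card_in_imset ?card_E //; exact: emb_inj.
Qed.
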